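(* Let $q$ be a prime power, $1\le k\le n\le m$, let $g_1,\dots,g_n\in\mathbb{F}_{q^m}$ be linearly independent over $\mathbb{F}_q$, and let $\mathcal{G}$ be the Gabidulin code of dimension $k$ with respect to $g_1,\dots,g_n$. Let $f\in\mathcal{L}_q(x,\mathbb{F}_{q^m})$ with $k\le\deg_q(f)<n$ and $\sigma_f=(f(g_1),\dots,f(g_n))$. Then $$d_H(\sigma_f,\mathcal{G})\ge n-\deg_q(f).$$ Moreover, if $f$ is monic, then $d_H(\sigma_f,\mathcal{G})=n-\deg_q(f)$ if and only if there exist a subset $E=\{g_{i_1},\dots,g_{i_{\deg_q(f)}}\}\subseteq\{g_1,\dots,g_n\}$ of size $\deg_q(f)$ and $v\in\mathcal{L}_q(x,\mathbb{F}_{q^m})$ with $v=0$ or $\deg_q(v)\le k-1$ such that $$f(x)-v(x)=\prod_{g\in\langle E\rangle}(x-g).$$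
   Context: A $q$-linearized polynomial over $\mathbb{F}_{q^m}$ is a polynomial $L(x)=\sum_{i=0}^{d}a_ix^{q^i}$ with $a_i\in\mathbb{F}_{q^m}$; if $a_d\ne0$, $d$ is its $q$-degree $\deg_q(L)$; $L$ is monic if $a_d=1$. $\mathcal{L}_q(x,\mathbb{F}_{q^m})$ is the set of these. $d_H$ denotes Hamming distance on $\mathbb{F}_{q^m}^n$ and $d_H(\mathbf{u},C)=\min_{\mathbf{c}\in C}d_H(\mathbf{u},\mathbf{c})$. $\langle E\rangle$ is the $\mathbb{F}_q$-span of $E$. The Gabidulin code of dimension $k$ with respect to $\mathbb{F}_q$-linearly independent $g_1,\dots,g_n$ is $\mathcal{G}=\{(v(g_1),\dots,v(g_n)) : v\in\mathcal{L}_q(x,\mathbb{F}_{q^m}),\ v=0\text{ or }\deg_q(v)<k\}$. *)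

(* Defs.v *)
From HB Require Import structures.
From mathcomp Require Import all_boot all_order all_algebra all_field.
From Stdlib Require Import ClassicalEpsilon.
Set Implicit Arguments. Unset Strict Implicit. Unset Printing Implicit Defensive.
Import GRing.Theory.
Local Open Scope ring_scope.

(* F_q-linear notions
   (free, span <<_>>) are mathcomp's vector-space notions of L over F. *)

Section Defs.
Variables (F : finFieldType) (L : fieldExtType F).

Definition qlinearized (q : nat) (p : {poly L}) : Prop :=
  forall i : nat, p`_i != 0 -> exists j : nat, i = (q ^ j)%N.

(* q-degree: for nonzero linearized p of q-degree d, size p = q^d + 1. *)
Definition qdeg (q : nat) (p : {poly L}) : nat := trunc_log q (size p).-1.

Definition hamming (n : nat) (u c : 'I_n -> L) : nat :=
  #|[pred i : 'I_n | u i != c i]|.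

Definition dist_code (n : nat) (u : 'I_n -> L) (C : ('I_n -> L) -> Prop) : nat :=
  epsilon (inhabits 0%N)
    (fun d => (exists c, C c /\ hamming u c = d) /\
              (forall c, C c -> (d <= hamming u c)%N)).

Definition gabidulin (q n k : nat) (g : 'I_n -> L) (c : 'I_n -> L) : Prop :=
  exists v : {poly L}, qlinearized q v /\ (v = 0 \/ (qdeg q v < k)%N) /\
    forall i, c i = v.[g i].

Definition span_poly (E : seq L) : {poly L} :=
  \prod_(x : finvect_type L | x \in <<E>>%VS) ('X - (x : L)%:P).

End Defs.

(* Main.v *)
Require Import Defs.
From HB Require Import structures.
From mathcomp Require Import all_boot all_order all_algebra all_field.
From mathcomp Require Import all_fingroup all_solvable.
Import GRing.Theory.
Local Open Scope ring_scope.
From Stdlib Require Import ClassicalEpsilon Classical.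
Import GRing.Theory.
Local Open Scope ring_scope.

Section Aux.
Context {F : finFieldType} {L : fieldExtType F}.

Lemma pnat_card : [pchar L].-nat #|F|.
Proof.
have [p pp pF] := finPcharP F.
have := abelem_pgroup (fin_ring_pchar_abelem pF).
rewrite /pgroup cardsT => Hp.
rewrite (eq_pnat _ (pchar_lalg L)).
by rewrite (eq_pnat _ (pcharf_eq pF)).
Qed.

Lemma frobD j (x y : L) : (x + y) ^+ (#|F| ^ j) = x ^+ (#|F| ^ j) + y ^+ (#|F| ^ j).
Proof. apply: exprDn_pchar; rewrite pnatX pnat_card; by []. Qed.

Lemma expF j (a : F) : a ^+ (#|F| ^ j) = a.
Proof. elim: j => [|j IH]; first by rewrite expr1.
by rewrite expnSr exprM IH expf_card. Qed.

Lemma frobZ j (a : F) (x : L) : (a *: x) ^+ (#|F| ^ j) = a *: x ^+ (#|F| ^ j).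
Proof. by rewrite exprZn expF. Qed.

Lemma lin_horner (p : {poly L}) a x y : qlinearized #|F| p ->
  p.[a *: x + y] = a *: p.[x] + p.[y].
Proof.
move=> Hp; rewrite !horner_coef scaler_sumr -big_split /=.
apply: eq_bigr => i _.
have [->|nz] := eqVneq p`_i 0; first by rewrite !mul0r scaler0 addr0.
have [j ->] := Hp i nz.
by rewrite frobD frobZ mulrDr scalerAr.
Qed.

Lemma lin_horner0 (p : {poly L}) : qlinearized #|F| p -> p.[0] = 0.
Proof.
move=> Hp; rewrite horner_coef0; apply/eqP/negPn/negP => nz.
have [j] := Hp 0%N nz. move=> /esym/eqP; rewrite expn_eq0 => /andP[/eqP h _].
by move: (finNzRing_gt1 F); rewrite h.
Qed.

Lemma lin_root_span (p : {poly L}) (X : seq L) x : qlinearized #|F| p ->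
  (forall y, y \in X -> p.[y] = 0) -> x \in <<X>>%VS -> p.[x] = 0.
Proof.
move=> Hp HX; rewrite -[X]/(val (in_tuple X)) => /coord_span ->.
elim/big_ind: _ => [|u w Hu Hw|i _].
- exact: lin_horner0.
- by rewrite -[u]scale1r lin_horner // Hu Hw scaler0 addr0.
- rewrite -[_ *: _]addr0 lin_horner // lin_horner0 // addr0 HX ?scaler0 //.
  by apply: mem_nth.
Qed.

Lemma qlin_sub q (f v : {poly L}) : qlinearized q f -> qlinearized q v ->
  qlinearized q (f - v).
Proof.
move=> Hf Hv i; rewrite coefB.
have [fi|/Hf //] := eqVneq f`_i 0.
have [vi|/Hv //] := eqVneq v`_i 0.
by rewrite fi vi subrr eqxx.
Qed.

Lemma size_qlin q (p : {poly L}) : (1 < q)%N -> qlinearized q p -> p != 0 ->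
  size p = (q ^ qdeg q p).+1.
Proof.
move=> q1 Hp nz.
have := Hp (size p).-1; rewrite -lead_coefE lead_coef_eq0 nz => /(_ isT) [j Hj].
rewrite /qdeg Hj trunc_expnK // -Hj prednK // size_poly_gt0 //.
Qed.

Lemma card_span (X : seq L) : free X ->
  #|[pred x : finvect_type L | x \in <<X>>%VS]| = (#|F| ^ size X)%N.
Proof.
move=> fX.
have := @card_vspace F (finvect_type L) _ <<X>>%VS.
by rewrite (eqP fX).
Qed.

Lemma free_sub n (g : 'I_n -> L) (I : {set 'I_n}) :
  free [seq g i | i <- enum 'I_n] -> free [seq g i | i in I].
Proof.
have P : perm_eq (enum I ++ enum (~: I)) (enum 'I_n).
  apply: uniq_perm; last by move=> i; rewrite mem_cat !mem_enum in_setC orbN.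
    rewrite cat_uniq !enum_uniq /= andbT; apply/hasPn => i.
    by rewrite !mem_enum in_setC.
  exact: enum_uniq.
rewrite -(perm_free (perm_map g P)) map_cat; exact: catl_free.
Qed.

Lemma agree_bound n (g : 'I_n -> L) (h : {poly L}) :
  free [seq g i | i <- enum 'I_n] -> qlinearized #|F| h -> h != 0 ->
  (#|[set i | (h.[g i] == 0)%R]| <= qdeg #|F| h)%N.
Proof.
move=> Hg Hh nz; set I := [set i | h.[g i] == 0].
set E := [seq g i | i in I].
have fE : free E by apply: free_sub.
have q1 := finNzRing_gt1 F.
pose s := enum [pred x : finvect_type L | x \in <<E>>%VS].
have := @max_poly_roots _ h (s : seq L) nz.
have -> : all (root h) (s : seq L).
  apply/allP => x; rewrite /s => xE. have {xE} xE : x \in <<E>>%VS by move: xE; rewrite (@mem_enum (finvect_type L)). apply/eqP.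
  have Hr : forall y, y \in E -> h.[y] = 0.
    by move=> y /mapP [i]; rewrite ?mem_enum inE => /eqP hi ->.
  by rewrite /root (lin_root_span _ _ _ Hh Hr xE).
have us : uniq s := enum_uniq _.
move=> /(_ isT us).
have -> : size s = #|[pred x : finvect_type L | x \in <<E>>%VS]| by rewrite cardE.
rewrite (size_qlin _ _ q1 Hh nz) card_span // size_map -cardE ltnS leq_exp2l //.
Qed.
End Aux.

Lemma min_exists (P : nat -> Prop) d : P d -> exists m, P m /\ forall d', P d' -> (m <= d')%N.
Proof.
elim/ltn_ind: d => d IH Pd.
case: (classic (exists d', (d' < d)%N /\ P d')) => [[d' [lt Pd']]|N].
  exact: IH lt Pd'.
exists d; split => // d' Pd'; rewrite leqNgt; apply/negP => lt; apply: N; by exists d'.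
Qed.

Lemma dist_spec {F : finFieldType} {L : fieldExtType F} n (u : 'I_n -> L) C c0 : C c0 ->
  (exists c, C c /\ hamming u c = dist_code u C) /\
  (forall c, C c -> (dist_code u C <= hamming u c)%N).
Proof.
move=> Cc0; rewrite /dist_code.
apply: (@epsilon_spec nat (inhabits 0%N) (fun d => (exists c, C c /\ hamming u c = d) /\ (forall c, C c -> (d <= hamming u c)%N))).
have [m [[c [Cc hc]] mn]] := @min_exists (fun d => exists c, C c /\ hamming u c = d) _ (ex_intro _ c0 (conj Cc0 erefl)).
exists m; split; first by exists c.
by move=> c' Cc'; apply: mn; exists c'.
Qed.

Lemma hamming_agree {F : finFieldType} {L : fieldExtType F} n (u c : 'I_n -> L) :
  hamming u c = (n - #|[set i | u i == c i]|)%N.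
Proof.
rewrite /hamming.
have e := cardC [set i | u i == c i]; rewrite card_ord in e.
rewrite -[X in (X - _)%N]e addKn; apply: eq_card => i; by rewrite !inE.
Qed.


Theorem theorem2 (F : finFieldType) (L : fieldExtType F) (q m n k : nat)
  (Hq : #|F| = q) (Hm : \dim (fullv : {vspace L}) = m)
  (Hk1 : (1 <= k)%N) (Hkn : (k <= n)%N) (Hnm : (n <= m)%N)
  (g : 'I_n -> L) (Hg : free [seq g i | i <- enum 'I_n])
  (f : {poly L}) (Hf : qlinearized q f) (Hf0 : f != 0)
  (Hdeg1 : (k <= qdeg q f)%N) (Hdeg2 : (qdeg q f < n)%N) :
  let sigma_f := fun i : 'I_n => f.[g i] in
  let G := gabidulin q k g in
  (n - qdeg q f <= dist_code sigma_f G)%N /\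
  (f \is monic ->
    (dist_code sigma_f G = (n - qdeg q f)%N <->
     exists (I : {set 'I_n}) (v : {poly L}),
       #|I| = qdeg q f /\
       qlinearized q v /\ (v = 0 \/ (qdeg q v <= k - 1)%N) /\
       f - v = span_poly [seq g i | i in I])).
Proof.
move=> sf G; subst q.
have q1 := finNzRing_gt1 F.
set d := qdeg #|F| f.
have G0 : G (fun=> 0).
  exists 0; split; first by move=> i; rewrite coef0 eqxx.
  by split; [left | move=> i; rewrite horner0].
have [[c0 [Gc0 hc0]] Hmin] := dist_spec _ sf G _ G0.
have key : forall v : {poly L}, qlinearized #|F| v -> (v = 0 \/ (qdeg #|F| v < k)%N) ->
    [/\ qlinearized #|F| (f - v), f - v != 0, size (f - v) = (#|F| ^ d).+1,
        qdeg #|F| (f - v) = d & lead_coef (f - v) = lead_coef f].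
  move=> v Hv Hvd.
  have sv : (size v < size f)%N.
    rewrite (size_qlin _ _ q1 Hf Hf0).
    case: Hvd => [->|lt]; first by rewrite size_poly0.
    have [->|vnz] := eqVneq v 0; first by rewrite size_poly0.
    rewrite (size_qlin _ _ q1 Hv vnz) ltnS ltn_exp2l //.
    exact: leq_trans lt Hdeg1.
  have sfv : size (f - v) = size f by rewrite size_polyDl // size_polyN.
  split.
  - exact: qlin_sub.
  - by rewrite -size_poly_eq0 sfv size_poly_eq0.
  - by rewrite sfv (size_qlin _ _ q1 Hf Hf0).
  - by rewrite /qdeg sfv.
  - by rewrite lead_coefDl // size_polyN.
have agree : forall c, G c -> (#|[set i | sf i == c i]| <= d)%N /\
     exists v, [/\ qlinearized #|F| v, (v = 0 \/ (qdeg #|F| v < k)%N),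
                 (forall i, c i = v.[g i]) &
                 [set i | sf i == c i] = [set i | ((f - v).[g i] == 0)%R]].
  move=> c [v [Hv [Hvd Hc]]].
  have [Hl Hnz _ Hdq _] := key v Hv Hvd.
  have E : [set i | sf i == c i] = [set i | ((f - v).[g i] == 0)%R].
    by apply/setP => i; rewrite !inE Hc hornerD hornerN subr_eq0.
  split; last by exists v.
  by rewrite E -Hdq; apply: agree_bound.
have part1 : (n - d <= dist_code sf G)%N.
  rewrite -hc0 hamming_agree; have [le _] := agree c0 Gc0.
  by apply: leq_sub2l.
split => // monf; split.
- move=> hd.
  have [ag [v [Hv Hvd Hc E]]] := agree c0 Gc0.
  set I := [set i | sf i == c0 i] in ag E.
  have cI : #|I| = d.
    move: hc0; rewrite hd hamming_agree -/I => e.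
    have le : (#|I| <= n)%N by rewrite -[n in (_ <= n)%N]card_ord max_card.
    apply/eqP; rewrite eqn_leq ag /=.
    have : (n - #|I| <= n - d)%N by rewrite e.
    rewrite leq_sub2lE //. 
    by rewrite ltnW.
  exists I, v; split => //; split => //; split.
    case: Hvd => [->|lt]; [by left | right].
    by rewrite subn1 -ltnS prednK.
  have [Hl Hnz Hs Hdq Hlc] := key v Hv Hvd.
  set Es := [seq g i | i in I].
  have fE : free Es := @free_sub _ _ n g I Hg.
  have Hr : forall y, y \in Es -> (f - v).[y] = 0.
    move=> y /mapP [i]; rewrite mem_enum => iI ->; apply/eqP.
    by move: iI; rewrite E inE.
  rewrite /span_poly -big_enum /=.
  set s := enum _.
  have us : uniq s := enum_uniq _.
  have allr : all (root (f - v)) (s : seq L).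
    apply/allP => x; rewrite /s => xE.
    have {xE} xE : x \in <<Es>>%VS by move: xE; rewrite (@mem_enum (finvect_type L)).
    by rewrite /root (lin_root_span _ _ _ Hl Hr xE).
  have dv := uniq_roots_dvdp allr (etrans (uniq_rootsE (s : seq L)) us).
  apply/eqP; rewrite eq_sym -eqp_monic; last first.
  - by apply/monicP; rewrite Hlc; apply/monicP.
  - exact: monic_prod_XsubC.
  rewrite -dvdp_size_eqp // size_prod_XsubC Hs.
  have -> : size s = #|[pred x : finvect_type L | x \in <<Es>>%VS]| by rewrite cardE.
  by rewrite card_span // size_map -cardE cI.
- move=> [I [v [cI [Hv [Hvd Heq]]]]].
  apply/eqP; rewrite eqn_leq part1 andbT.
  have Gc : G (fun i => v.[g i]).
    exists v; split => //; split => //.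
    case: Hvd => [->|le]; [by left | right].
    by rewrite (leq_ltn_trans le) // subn1 ltn_predL.
  apply: leq_trans (Hmin _ Gc) _.
  rewrite hamming_agree leq_sub2l // -cI; apply: subset_leq_card.
  apply/subsetP => i iI; rewrite inE /sf.
  have gE : (g i : finvect_type L) \in <<[seq g i | i in I]>>%VS.
    by apply: memv_span; apply: map_f; rewrite mem_enum.
  have : (f - v).[g i] = 0.
    rewrite Heq /span_poly (bigD1 (g i : finvect_type L)) //=.
    by rewrite hornerM hornerXsubC subrr mul0r.
  by rewrite hornerD hornerN => /eqP; rewrite subr_eq0.
Qed.
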